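(* Let $T$ be an $X$-tree and suppose $x_1,\dots,x_6$ are six distinct elements of $X$ such that $x_1x_4$, $x_2x_5$, $x_3x_6$ are all $T$-cherries. Then $\mathcal{L}_1=\{x_1x_2,x_2x_3,x_3x_4,x_4x_5,x_5x_6,x_6x_1\}$ and $\mathcal{L}_2=\{x_1x_3,x_3x_4,x_4x_6,x_6x_1\}$ are circuits of $\mathbb{M}(T)$ while their symmetric difference $\{x_1x_2,x_2x_3,x_3x_1,x_4x_5,x_5x_6,x_6x_4\}$ is independent in $\mathbb{M}(T)$; consequently $\mathbb{M}(T)$ is not a binary matroid. In particular, if $T$ is a binary $X$-tree such that $\mathbb{M}(T)$ is a binary matroid, then $T$ is a caterpillar tree.
   Context: Let $X$ be a finite set with $|X|=n\ge 3$. An $X$-tree is a finite tree $T=(V,E)$ whose set of degree-1 vertices is exactly $X$ and which has no vertices of degree $2$; it is binary if all interior vertices have degree $3$, and a binary $X$-tree is a caterpillar tree if all its interior vertices lie on a single path of $T$. A cord is a $2$-subset $xy$ of $X$. For each cord $xy$, $\lambda^T_{xy}:\mathbb{R}^E\to\mathbb{R}$, $\omega\mapsto\sum_{e\in E(x|y)}\omega(e)$ where $E(x|y)$ is the edge set of the path from $x$ to $y$. $\mathbb{M}(T)$ is the matroid on $\binom{X}{2}$ represented over $\mathbb{R}$ by $xy\mapsto\lambda^T_{xy}$; circuits are minimal dependent sets. A binary matroid is one representable over the field with two elements. For $x\in X$, $e_x$ is the edge containing $x$; a cord $ab$ is a $T$-cherry if $e_a$ and $e_b$ share a vertex. *)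

(* Defs.v *)
From HB Require Import structures.
From mathcomp Require Import all_boot all_order all_algebra.
Set Implicit Arguments. Unset Strict Implicit. Unset Printing Implicit Defensive.
Import Order.TTheory GRing.Theory Num.Theory.
Local Open Scope ring_scope.

Section Trees.
Variables (V : finType) (adj : rel V).

Definition deg (v : V) : nat := #|[set u | adj v u]|.

Definition edges : {set {set V}} :=
  [set A : {set V} | [exists u, exists v, adj u v && (A == [set u; v])]].

(* X = the set of degree-1 vertices (leaves) *)
Definition leaves : {set V} := [set v | deg v == 1%N].

Definition is_tree : Prop :=
  symmetric adj /\ irreflexive adj /\ (forall u v, connect adj u v) /\
  (forall c : seq V, uniq c -> (3 <= size c)%N -> ~~ cycle adj c).

Definition is_Xtree : Prop :=
  is_tree /\ (forall v, deg v != 2%N) /\ (3 <= #|leaves|)%N.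

Definition is_binary_Xtree : Prop :=
  is_Xtree /\ (forall v, v \notin leaves -> deg v = 3%N).

Definition is_caterpillar : Prop :=
  is_binary_Xtree /\
  exists (x : V) (p : seq V), path adj x p /\ uniq (x :: p) /\
    (forall v, v \notin leaves -> v \in x :: p).

Definition simple_walk (x y : V) (p : seq V) : bool :=
  [&& path adj x p, last x p == y & uniq (x :: p)].

Definition walk_edges (x : V) (p : seq V) : seq {set V} :=
  [seq [set uv.1; uv.2] | uv <- zip (x :: p) p].

(* e lies in E(x|y), the edge set of the path from x to y
   (a simple walk has fewer than #|V| steps, so the bound is harmless) *)
Definition on_path (x y : V) (e : {set V}) : bool :=
  [exists k : 'I_#|V|, exists t : k.-tuple V,
     simple_walk x y t && (e \in walk_edges x t)].

Definition cord_path (c : {set V}) (e : {set V}) : bool :=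
  [exists x in c, exists y in c, (x != y) && on_path x y e].

Definition cords : {set {set V}} :=
  [set c : {set V} | (c \subset leaves) && (#|c| == 2%N)].

(* T-cherry ab: e_a and e_b share a vertex *)
Definition cherry (a b : V) : bool :=
  [&& a \in leaves, b \in leaves, a != b &
   [exists u, exists v, [&& adj a u, adj b v &
      ([set a; u] :&: [set b; v] != set0)]]].

Variable R : realFieldType.

Definition lambda (c : {set V}) (w : {set V} -> R) : R :=
  \sum_(e in edges | cord_path c e) w e.

Definition indep (S : {set {set V}}) : Prop :=
  S \subset cords /\
  forall a : {set V} -> R,
    (forall w : {set V} -> R, \sum_(c in S) a c * lambda c w = 0) ->
    forall c, c \in S -> a c = 0.

Definition circuit (S : {set {set V}}) : Prop :=
  S \subset cords /\ ~ indep S /\ (forall S' : {set {set V}}, S' \proper S -> indep S').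

Definition binary_matroid : Prop :=
  exists (m : nat) (phi : {set V} -> 'rV['F_2]_m),
    forall S : {set {set V}}, S \subset cords ->
      (indep S <->
       forall a : {set V} -> 'F_2,
         \sum_(c in S) a c *: phi c = 0 -> forall c, c \in S -> a c = 0).

End Trees.

(* Main.v *)
Require Import Defs.
From HB Require Import structures.
From mathcomp Require Import all_boot all_order all_algebra.
From mathcomp Require Import ring lra.
Set Implicit Arguments. Unset Strict Implicit. Unset Printing Implicit Defensive.
Import Order.TTheory GRing.Theory Num.Theory.

Lemma mem_zipP (T S : eqType) (s : seq T) (t : seq S) a b :
  (a, b) \in zip s t -> (a \in s) && (b \in t).
Proof.
elim: s t => [|x s IH] [|y t] //=.
rewrite in_cons => /orP[/eqP [-> ->]|/IH /andP[H1 H2]]; rewrite !in_cons ?eqxx //.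
by rewrite H1 H2 !orbT.
Qed.

Lemma walk_edge_mem (V : finType) (x a b : V) (t : seq V) :
  [set a; b] \in walk_edges x t -> a \in x :: t.
Proof.
case/mapP => [[u v]] /mem_zipP /andP[Hu Hv] /= E.
have : a \in [set u; v] by rewrite -E !inE eqxx.
move: Hu Hv; rewrite !inE => Hu Hv /orP[/eqP->//|/eqP->]. by rewrite Hv orbT.
Qed.

Lemma leaf_nb (V : finType) (adj : rel V) l a b :
  l \in leaves adj -> adj l a -> adj l b -> a = b.
Proof.
rewrite inE /deg => /eqP H1 Ha Hb.
case: (eqVneq a b) => // nab.
have : #|[set a; b]| <= #|[set u | adj l u]|.
  by apply/subset_leq_card/subsetP=> z; rewrite !inE => /orP[]/eqP->.
by rewrite cards2 nab H1.
Qed.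

Lemma walk_int (V : finType) (adj : rel V) (Hs : symmetric adj) x y t z :
  simple_walk adj x y t -> z \in t -> z != y -> z \notin leaves adj.
Proof.
case/and3P => Hp /eqP Hl Hu zt zy.
case/splitPr: zt Hp Hl Hu => t1 t2.
rewrite cat_path /= last_cat /= => /andP[_ /andP[Hpz Hp2]].
case: t2 Hp2 => [|h t2] /=; first by move=> _ Ez; rewrite Ez eqxx in zy.
case/andP=> Hzh _ _ Hu.
apply/negP => Hlz.
have Hs2 : adj z (last x t1) by rewrite Hs.
have Eh := leaf_nb Hlz Hzh Hs2.
move: Hu; rewrite -cons_uniq -cat_cons cat_uniq => /and3P[_ /hasPn Hh _].
have := Hh h; rewrite !in_cons eqxx orbT => /(_ isT).
by rewrite -in_cons Eh mem_last.
Qed.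

Lemma ex_walk (V : finType) (adj : rel V) (HT : is_tree adj) x y :
  exists t, simple_walk adj x y t.
Proof.
case: HT => _ [_ [Hc _]].
case/connectP: (Hc x y) => p Hp ->.
case: (shortenP Hp) => p' Hp' Hu _.
by exists p'; rewrite /simple_walk Hp' Hu eqxx.
Qed.

Lemma on_pathP (V : finType) (adj : rel V) x y e :
  reflect (exists t, simple_walk adj x y t && (e \in walk_edges x t)) (on_path adj x y e).
Proof.
apply: (iffP existsP) => [[k /existsP[t H]]|[t /andP[Hw He]]]; first by exists t.
have Hs : size t < #|V|.
  case/and3P: Hw => _ _ /card_uniqP Hc. by have := max_card (mem (x :: t)); rewrite Hc.
exists (Ordinal Hs); apply/existsP; exists (in_tuple t); by rewrite Hw He.
Qed.

Lemma off_path (V : finType) (adj : rel V) (Hs : symmetric adj) l q y z :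
  l \in leaves adj -> l != y -> l != z -> on_path adj y z [set l; q] = false.
Proof.
move=> Hl ly lz; apply/negbTE/negP => /on_pathP [t /andP[Hw He]].
have := walk_edge_mem He; rewrite in_cons (negbTE ly) /= => Ht.
by have := walk_int Hs Hw Ht lz; rewrite Hl.
Qed.

Lemma prepend (V : finType) (adj : rel V) (HT : is_tree adj) l p y t :
  l \in leaves adj -> adj l p -> y != l -> simple_walk adj p y t ->
  simple_walk adj l y (p :: t).
Proof.
case: HT => Hs [Hi _] Hl Hlp yl Hw.
have Hw' := Hw; case/and3P: Hw => Hp /eqP Hlast Hu.
apply/and3P; split; first by rewrite /= Hlp.
  by rewrite /= Hlast.
rewrite cons_uniq Hu andbT in_cons negb_or; apply/andP; split.
  by apply/eqP => E; move: Hlp; rewrite -E Hi.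
apply/negP => Hlt. have := walk_int Hs Hw' Hlt; rewrite eq_sym yl Hl.
by move/(_ isT).
Qed.

Lemma head_dec (V : finType) (adj : rel V) (HT : is_tree adj) l p y e :
  l \in leaves adj -> adj l p -> y != l ->
  on_path adj l y e = (e == [set l; p]) || on_path adj p y e.
Proof.
move=> Hl Hlp yl; apply/idP/idP.
  case/on_pathP => [[|a t]] /andP[/and3P[Hp /eqP Hlast Hu] He].
    by rewrite /= in Hlast; rewrite Hlast eqxx in yl.
  move: Hp => /= /andP[Hla Hp]. have Ea := leaf_nb Hl Hla Hlp. subst a.
  move: He; rewrite /walk_edges /= in_cons => /orP[->//|He].
  apply/orP; right; apply/on_pathP; exists t; rewrite He andbT.
  apply/and3P; split => //; first by move: Hlast => /= ->.
  by move: Hu; rewrite cons_uniq => /andP[].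
case/orP => [/eqP->|].
  have [t Hw] := ex_walk HT p y.
  apply/on_pathP; exists (p :: t); rewrite (prepend HT Hl Hlp yl Hw) /=.
  by rewrite /walk_edges /= in_cons eqxx.
case/on_pathP => t /andP[Hw He].
apply/on_pathP; exists (p :: t); rewrite (prepend HT Hl Hlp yl Hw) /=.
by rewrite /walk_edges /= in_cons He orbT.
Qed.

Lemma walk_edges_rcons (V : finType) (a y : V) t :
  walk_edges a (rcons t y) = rcons (walk_edges a t) [set last a t; y].
Proof. by elim: t a => [|b t IH] a //=; rewrite /walk_edges /= -/(walk_edges b _) IH. Qed.

Lemma append (V : finType) (adj : rel V) (HT : is_tree adj) a y q t :
  y \in leaves adj -> adj y q -> a != y -> simple_walk adj a q t ->
  simple_walk adj a y (rcons t y).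
Proof.
case: HT => Hs [Hi _] Hl Hyq ay Hw.
have Hw' := Hw; case/and3P: Hw => Hp /eqP Hlast Hu.
apply/and3P; split; first by rewrite rcons_path Hp Hlast Hs.
  by rewrite last_rcons.
rewrite -rcons_cons rcons_uniq Hu andbT in_cons negb_or eq_sym ay /=.
apply/negP => Hyt.
have yq : y != q by apply/eqP => E; move: Hyq; rewrite -E Hi.
by have := walk_int Hs Hw' Hyt yq; rewrite Hl.
Qed.

Lemma tail_dec (V : finType) (adj : rel V) (HT : is_tree adj) a y q e :
  y \in leaves adj -> adj y q -> a != y ->
  on_path adj a y e = (e == [set y; q]) || on_path adj a q e.
Proof.
have Hs : symmetric adj by case: HT.
move=> Hl Hyq ay; apply/idP/idP.
  case/on_pathP => t; case/lastP: t => [|t z] /andP[/and3P[Hp /eqP Hlast Hu] He].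
    by rewrite /= in Hlast; rewrite Hlast eqxx in ay.
  rewrite last_rcons in Hlast; subst z.
  move: Hp; rewrite rcons_path => /andP[Hp Hly].
  have Eq : last a t = q by apply: (leaf_nb Hl); rewrite // Hs.
  move: He; rewrite walk_edges_rcons mem_rcons in_cons Eq [[set q; y]]setUC => /orP[->//|He].
  apply/orP; right; apply/on_pathP; exists t; rewrite He andbT.
  apply/and3P; split => //; first by rewrite Eq.
  by move: Hu; rewrite -rcons_cons rcons_uniq => /andP[].
case/orP => [/eqP->|].
  have [t Hw] := ex_walk HT a q.
  have Hw' := Hw; case/and3P: Hw' => _ /eqP Hlast _.
  apply/on_pathP; exists (rcons t y); rewrite (append HT Hl Hyq ay Hw) /=.
  by rewrite walk_edges_rcons mem_rcons in_cons Hlast setUC eqxx.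
case/on_pathP => t /andP[Hw He].
apply/on_pathP; exists (rcons t y); rewrite (append HT Hl Hyq ay Hw) /=.
by rewrite walk_edges_rcons mem_rcons in_cons He orbT.
Qed.

Lemma cord_path2 (V : finType) (adj : rel V) x y e : x != y ->
  cord_path adj [set x; y] e = on_path adj x y e || on_path adj y x e.
Proof.
move=> xy; apply/existsP/orP => [[u /andP[Hu /existsP[v /andP[Hv /andP[uv Huv]]]]]|[H|H]].
- move: Hu Hv uv Huv; rewrite !inE => /orP[]/eqP-> /orP[]/eqP->; rewrite ?eqxx //= => _ H;
  by [left|right].
- exists x; rewrite !inE eqxx /=; apply/existsP; exists y; by rewrite !inE eqxx orbT xy H.
- exists y; rewrite !inE eqxx orbT /=; apply/existsP; exists x; have yx : y != x by rewrite eq_sym.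
  by rewrite !inE eqxx yx H.
Qed.

Lemma nl_neq (T : eqType) (A : pred T) a b : ~~ A a -> A b -> a != b.
Proof. by move=> Ha Hb; apply/eqP => E; rewrite E Hb in Ha. Qed.

Lemma cord_dec (V : finType) (adj : rel V) (HT : is_tree adj) x y px py e :
  x \in leaves adj -> y \in leaves adj -> x != y -> adj x px -> adj y py ->
  px \notin leaves adj -> py \notin leaves adj ->
  cord_path adj [set x; y] e = [|| e == [set x; px], e == [set y; py],
     on_path adj px py e | on_path adj py px e].
Proof.
move=> Hx Hy xy Hxp Hyp Npx Npy.
have yx : y != x by rewrite eq_sym.
rewrite cord_path2 // (head_dec HT e Hx Hxp yx) (head_dec HT e Hy Hyp xy).
rewrite (tail_dec HT e Hy Hyp) ?(nl_neq Npx Hy) // (tail_dec HT e Hx Hxp) ?(nl_neq Npy Hx) //.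
by case: (e == [set x; px]); case: (e == [set y; py]); case: (on_path adj px py e);
  case: (on_path adj py px e).
Qed.

Lemma set2_eq (T : finType) (a b c d : T) :
  ([set a; b] == [set c; d]) = ((a == c) && (b == d)) || ((a == d) && (b == c)).
Proof.
apply/eqP/idP => [E|/orP[]/andP[/eqP-> /eqP->] //]; last by rewrite setUC.
have Ha : a \in [set c; d] by rewrite -E !inE eqxx.
have Hb : b \in [set c; d] by rewrite -E !inE eqxx orbT.
have Hc : c \in [set a; b] by rewrite E !inE eqxx.
have Hd : d \in [set a; b] by rewrite E !inE eqxx orbT.
move: Ha Hb Hc Hd; rewrite !inE.
by move=> /orP[]/eqP Ea /orP[]/eqP Eb /orP[]/eqP Ec /orP[]/eqP Ed; subst; rewrite ?eqxx ?orbT.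
Qed.
Local Open Scope ring_scope.

Lemma no_adj_leaves (V : finType) (adj : rel V) (HT : is_tree adj) a b z :
  a \in leaves adj -> b \in leaves adj -> adj a b -> z != a -> z != b -> False.
Proof.
have Hs : symmetric adj by case: HT.
move=> Ha Hb Hab za zb.
have [[|h t] /and3P[Hp /eqP Hl Hu]] := ex_walk HT a z.
  by rewrite /= in Hl; rewrite Hl eqxx in za.
move: Hp => /= /andP[Hah Hp]. have Eh := leaf_nb Ha Hah Hab. subst h.
case: t Hp Hl Hu => [|h t] /=; first by move=> _ Hl; rewrite Hl eqxx in zb.
case/andP => Hbh _ _. have Hba : adj b a by rewrite Hs.
have Eh := leaf_nb Hb Hbh Hba. subst h.
by rewrite !in_cons eqxx !orbT.
Qed.

Lemma cherry_par (V : finType) (adj : rel V) (HT : is_tree adj) a b z :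
  cherry adj a b -> z \in leaves adj -> z != a -> z != b ->
  exists2 p, adj a p && adj b p & p \notin leaves adj.
Proof.
have Hs : symmetric adj by case: HT.
case/and4P => Ha Hb ab /existsP[u /existsP[v /and3P[Hau Hbv /set0Pn[w Hw]]]] Hz za zb.
move: Hw; rewrite !inE => /andP [/orP[]/eqP-> /orP[]/eqP E].
- by rewrite E eqxx in ab.
- subst v. case: (no_adj_leaves HT Hb Ha Hbv zb za).
- subst u. case: (no_adj_leaves HT Ha Hb Hau za zb).
- subst v. exists u; first by rewrite Hau Hbv.
  apply/negP => Hu. have Hua : adj u a by rewrite Hs.
  have Hub : adj u b by rewrite Hs.
  by rewrite (leaf_nb Hu Hua Hub) eqxx in ab.
Qed.

Lemma cp_pend (V : finType) (adj : rel V) (HT : is_tree adj) xi xj xk pi pj pk :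
  xi \in leaves adj -> xj \in leaves adj -> xk \in leaves adj -> xj != xk ->
  adj xi pi -> adj xj pj -> adj xk pk ->
  pi \notin leaves adj -> pj \notin leaves adj -> pk \notin leaves adj ->
  cord_path adj [set xj; xk] [set xi; pi] = (xi == xj) || (xi == xk).
Proof.
have Hs : symmetric adj by case: HT.
move=> Hi Hj Hk jk Hip Hjp Hkp Ni Nj Nk.
rewrite (cord_dec HT _ Hj Hk jk Hjp Hkp Nj Nk) !set2_eq.
have n1 : (xi == pj) = false by rewrite eq_sym; exact: negbTE (nl_neq Nj Hi).
have n2 : (xi == pk) = false by rewrite eq_sym; exact: negbTE (nl_neq Nk Hi).
rewrite n1 n2 (negbTE (nl_neq Ni Hj)) (negbTE (nl_neq Ni Hk)) !andbF !orbF.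
rewrite !off_path ?orbF ?n1 ?n2 //.
case: (eqVneq xi xj) => [E|] /=.
  subst xj; by rewrite (leaf_nb Hi Hip Hjp) eqxx.
case: (eqVneq xi xk) => [E|] //=.
subst xk; by rewrite (leaf_nb Hi Hip Hkp) eqxx.
Qed.

Lemma in_edges (V : finType) (adj : rel V) a b : adj a b -> [set a; b] \in edges adj.
Proof. by move=> H; rewrite inE; apply/existsP; exists a; apply/existsP; exists b; rewrite H eqxx. Qed.

Lemma sum_ind (R : pzRingType) (T : finType) (P : pred T) (a : T) :
  \sum_(e | P e) ((e == a)%:R : R) = (P a)%:R.
Proof.
case: (boolP (P a)) => Pa.
  rewrite (bigD1 a) //= eqxx big1 ?addr0 // => e /andP[_ ea]; by rewrite (negbTE ea).
by rewrite big1 // => e Pe; case: eqP Pe Pa => // -> ->.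
Qed.

Lemma lambda_pend (R : realFieldType) (V : finType) (adj : rel V) (HT : is_tree adj)
  xi xj xk pi pj pk :
  xi \in leaves adj -> xj \in leaves adj -> xk \in leaves adj -> xj != xk ->
  adj xi pi -> adj xj pj -> adj xk pk ->
  pi \notin leaves adj -> pj \notin leaves adj -> pk \notin leaves adj ->
  @lambda _ adj R [set xj; xk] (fun e => (e == [set xi; pi])%:R) = ((xi == xj) || (xi == xk))%:R.
Proof.
move=> Hi Hj Hk jk Hip Hjp Hkp Ni Nj Nk.
rewrite /lambda (@sum_ind R _ (fun e => (e \in edges adj) && cord_path adj [set xj; xk] e)).
by rewrite in_edges // (cp_pend HT Hi Hj Hk jk Hip Hjp Hkp Ni Nj Nk).
Qed.

Lemma lam_alt (R : realFieldType) (V : finType) (adj : rel V) c w :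
  @lambda _ adj R c w = \sum_(e in edges adj) (cord_path adj c e)%:R * w e.
Proof.
rewrite /lambda big_mkcondr; apply: eq_bigr => e _.
by case: cord_path; rewrite ?mul1r ?mul0r.
Qed.

Lemma lambda_eq3 (R : realFieldType) (V : finType) (adj : rel V) c1 c2 c3 d1 d2 d3 :
  (forall e, (cord_path adj c1 e + cord_path adj c2 e + cord_path adj c3 e =
             cord_path adj d1 e + cord_path adj d2 e + cord_path adj d3 e)%N) ->
  forall w, @lambda _ adj R c1 w + @lambda _ adj R c2 w + @lambda _ adj R c3 w =
            @lambda _ adj R d1 w + @lambda _ adj R d2 w + @lambda _ adj R d3 w.
Proof.
move=> H w; rewrite !lam_alt -!big_split; apply: eq_bigr => e _ /=.
by rewrite -!mulrDl -!natrD H.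
Qed.

Lemma lambda_eq2 (R : realFieldType) (V : finType) (adj : rel V) c1 c2 d1 d2 :
  (forall e, (cord_path adj c1 e + cord_path adj c2 e =
             cord_path adj d1 e + cord_path adj d2 e)%N) ->
  forall w, @lambda _ adj R c1 w + @lambda _ adj R c2 w =
            @lambda _ adj R d1 w + @lambda _ adj R d2 w.
Proof.
move=> H w; rewrite !lam_alt -!big_split; apply: eq_bigr => e _ /=.
by rewrite -!mulrDl -!natrD H.
Qed.

Lemma sum_list (R : nmodType) (T : finType) (L : {set T}) (s : seq T) (F : T -> R) :
  (forall c, (c \in L) = (c \in s)) -> uniq s -> \sum_(c in L) F c = \sum_(c <- s) F c.
Proof. by move=> H Hu; rewrite big_uniq //; apply: eq_bigl => c; rewrite /= H. Qed.

Lemma indep_of (V : finType) (adj : rel V) (R : realFieldType) (S L : {set {set V}}) :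
  S \subset L -> S \subset cords adj ->
  (forall b : {set V} -> R, (forall w, \sum_(c in L) b c * @lambda _ adj R c w = 0) ->
      (forall c, c \in L -> c \notin S -> b c = 0) -> forall c, c \in L -> b c = 0) ->
  indep adj R S.
Proof.
move=> SL Sc H; split=> // a Ha c cS.
pose b c := if c \in S then a c else 0.
have Hb : forall c, c \in L -> b c = 0.
  apply: H => [w|c' _ Hc']; last by rewrite /b (negbTE Hc').
  rewrite -[RHS](Ha w) (big_setID S) /= (setIidPr SL) [X in _ + X]big1 ?addr0.
    by apply: eq_bigr => c' Hc; rewrite /b Hc.
  by move=> c'; rewrite inE => /andP[Hc _]; rewrite /b (negbTE Hc) mul0r.
by have := Hb c (subsetP SL c cS); rewrite /b cS.
Qed.

From Stdlib Require Import Classical.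

Lemma F2_cases (x : 'F_2) : x = 0 \/ x = 1.
Proof.
case: x => [[|[|n]] H]; last by []. 
  by left; apply: val_inj.
by right; apply: val_inj.
Qed.

Lemma F2_2 (m : nat) (v : 'rV['F_2]_m) : v + v = 0.
Proof.
rewrite -{1 2}(scale1r v) -scalerDl.
have -> : (1 + 1 : 'F_2) = 0 by apply: val_inj.
by rewrite scale0r.
Qed.

Lemma circ_sum (V : finType) (adj : rel V) (R : realFieldType) m (phi : {set V} -> 'rV['F_2]_m)
  (Hphi : forall S : {set {set V}}, S \subset cords adj ->
      (indep adj R S <->
       forall a : {set V} -> 'F_2,
         \sum_(c in S) a c *: phi c = 0 -> forall c, c \in S -> a c = 0)) L :
  circuit adj R L -> \sum_(c in L) phi c = 0.
Proof.
move=> [C [D M]].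
have : ~ (forall a : {set V} -> 'F_2, \sum_(c in L) a c *: phi c = 0 ->
            forall c, c \in L -> a c = 0).
  by move=> H; apply: D; apply/(Hphi L C).
move=> H; have [a Ha'] := not_all_ex_not _ _ H.
have [Ha H2] := imply_to_and _ _ Ha'.
have [c0 Hc0'] := not_all_ex_not _ _ H2.
have [Hc0 Hac0] := imply_to_and _ _ Hc0'.
have all1 : forall c, c \in L -> a c = 1.
  move=> c1 Hc1; case: (F2_cases (a c1)) => // Ha1; exfalso.
  pose S' := [set c in L | a c != 0].
  have SL : S' \subset L by apply/subsetP => c; rewrite inE => /andP[].
  have PS : S' \proper L.
    apply/properP; split => //; exists c1 => //; by rewrite inE Ha1 eqxx andbF.
  have HS' := M S' PS.
  have Hz : \sum_(c in S') a c *: phi c = 0.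
    rewrite -[RHS]Ha [RHS](big_setID S') /= (setIidPr SL) [X in _ = _ + X]big1 ?addr0 //.
    move=> c; rewrite !inE => /andP[]; rewrite negb_and => /orP[/negP H3 /H3 //|/negPn/eqP -> _].
    by rewrite scale0r.
  case: Hac0; apply: (proj1 (Hphi S' (subset_trans SL C)) HS' a Hz).
  by rewrite inE Hc0; apply/eqP.
rewrite -[RHS]Ha; apply: eq_bigr => c Hc; by rewrite all1 // scale1r.
Qed.

Lemma not_binary (V : finType) (adj : rel V) (R : realFieldType) (L1 L2 : {set {set V}}) c0 :
  circuit adj R L1 -> circuit adj R L2 -> indep adj R ((L1 :\: L2) :|: (L2 :\: L1)) ->
  c0 \in (L1 :\: L2) :|: (L2 :\: L1) ->
  ~ binary_matroid adj R.
Proof.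
move=> C1 C2 ID Hc0 [m [phi Hphi]].
have S1 := circ_sum Hphi C1; have S2 := circ_sum Hphi C2.
have Dis : [disjoint L1 :\: L2 & L2 :\: L1].
  rewrite disjoint_subset; apply/subsetP => c; rewrite !inE => /andP[H1 H2]; by rewrite H2.
have E : \sum_(c in (L1 :\: L2) :|: (L2 :\: L1)) phi c = 0.
  have -> : \sum_(c in (L1 :\: L2) :|: (L2 :\: L1)) phi c =
     \sum_(c in [predU (L1 :\: L2) & (L2 :\: L1)]) phi c by apply: eq_bigl => c; rewrite !inE.
  transitivity (\sum_(c in L1) phi c + \sum_(c in L2) phi c); last by rewrite S1 S2 addr0.
  rewrite bigU //= [\sum_(c in L1) _](big_setID L2) [\sum_(c in L2) _](big_setID L1) /=.
  by rewrite [L2 :&: L1]setIC addrACA F2_2 add0r.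
have Hsub : (L1 :\: L2) :|: (L2 :\: L1) \subset cords adj by case: ID.
have := proj1 (Hphi _ Hsub) ID (fun _ => 1).
move=> /(_ _ c0 Hc0) H; have : (1 : 'F_2) = 0 by apply: H; rewrite -[RHS]E; apply: eq_bigr => c _; rewrite scale1r.
by move/eqP; rewrite oner_eq0.
Qed.

Ltac kill_neq := repeat match goal with
  | H : is_true (?a != ?b) |- context [?a == ?b] => rewrite (negbTE H)
  | H : is_true (?a != ?b) |- context [?b == ?a] => rewrite [b == a]eq_sym (negbTE H)
  end.

Ltac add_sym := repeat match goal with
  | H : is_true (?a != ?b) |- _ => lazymatch goal with
      | _ : is_true (b != a) |- _ => fail
      | _ => have ? : b != a by rewrite eq_sym
      end
  end.

Ltac case6 := case/orP=> [/eqP->|/orP[/eqP->|/orP[/eqP->|/orP[/eqP->|/orP[/eqP->|/eqP->]]]]].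
Ltac case4 := case/orP=> [/eqP->|/orP[/eqP->|/orP[/eqP->|/eqP->]]].
Ltac simp_num := rewrite ?mulr1n ?mulr0n ?mulr1 ?mulr0 ?addr0 ?add0r.

Ltac split_ands := repeat match goal with
  | H : is_true (_ && _) |- _ => case/andP: H => ? ?
  end.

Lemma cord_in (V : finType) (adj : rel V) x y :
  x \in leaves adj -> y \in leaves adj -> x != y -> [set x; y] \in cords adj.
Proof. by move=> Hx Hy xy; rewrite inE subUset !sub1set Hx Hy cards2 xy. Qed.


Lemma cyc6 (R : realFieldType) (b1 b2 b3 b4 b5 b6 : R) :
  b1 + b6 = 0 -> b1 + b2 = 0 -> b2 + b3 = 0 -> b3 + b4 = 0 -> b4 + b5 = 0 -> b5 + b6 = 0 ->
  (b1 = 0 \/ b2 = 0 \/ b3 = 0 \/ b4 = 0 \/ b5 = 0 \/ b6 = 0) ->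
  b1 = 0 /\ b2 = 0 /\ b3 = 0 /\ b4 = 0 /\ b5 = 0 /\ b6 = 0.
Proof.
move=> E1 E2 E3 E4 E5 E6 [Z|[Z|[Z|[Z|[Z|Z]]]]]; (repeat split); lra.
Qed.

Lemma cyc4 (R : realFieldType) (b1 b2 b3 b4 : R) :
  b1 + b4 = 0 -> b1 + b2 = 0 -> b2 + b3 = 0 -> b3 + b4 = 0 ->
  (b1 = 0 \/ b2 = 0 \/ b3 = 0 \/ b4 = 0) ->
  b1 = 0 /\ b2 = 0 /\ b3 = 0 /\ b4 = 0.
Proof.
move=> E1 E2 E3 E4 [Z|[Z|[Z|Z]]]; (repeat split); lra.
Qed.

Lemma tri2 (R : realFieldType) (b1 b2 b3 b4 b5 b6 : R) :
  b1 + b3 = 0 -> b1 + b2 = 0 -> b2 + b3 = 0 -> b4 + b6 = 0 -> b4 + b5 = 0 -> b5 + b6 = 0 ->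
  b1 = 0 /\ b2 = 0 /\ b3 = 0 /\ b4 = 0 /\ b5 = 0 /\ b6 = 0.
Proof.
move=> E1 E2 E3 E4 E5 E6; (repeat split); lra.
Qed.

Lemma part1 (R : realFieldType) (V : finType) (adj : rel V) (HT : is_tree adj)
  x1 x2 x3 x4 x5 x6 a b c :
  uniq [:: x1; x2; x3; x4; x5; x6] ->
  all (fun x => x \in leaves adj) [:: x1; x2; x3; x4; x5; x6] ->
  adj x1 a -> adj x4 a -> adj x2 b -> adj x5 b -> adj x3 c -> adj x6 c ->
  a \notin leaves adj -> b \notin leaves adj -> c \notin leaves adj ->
     let L1 := [set [set x1; x2]; [set x2; x3]; [set x3; x4];
                    [set x4; x5]; [set x5; x6]; [set x6; x1]] in
     let L2 := [set [set x1; x3]; [set x3; x4]; [set x4; x6]; [set x6; x1]] in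
     [/\ circuit adj R L1, circuit adj R L2,
         (L1 :\: L2) :|: (L2 :\: L1) =
           [set [set x1; x2]; [set x2; x3]; [set x3; x1];
                [set x4; x5]; [set x5; x6]; [set x6; x4]],
         indep adj R ((L1 :\: L2) :|: (L2 :\: L1)) &
         ~ binary_matroid adj R].
Proof.
move=> Hu Hall A1 A4 A2 A5 A3 A6 Na Nb Nc L1 L2.
have Hs : symmetric adj by case: HT.
have Hu' := Hu.
move: Hu'; rewrite /= !inE !negb_or => Hu'; split_ands.
add_sym.
have X1 : x1 \in leaves adj by apply: (allP Hall); rewrite !inE eqxx ?orbT.
have X2 : x2 \in leaves adj by apply: (allP Hall); rewrite !inE eqxx ?orbT.
have X3 : x3 \in leaves adj by apply: (allP Hall); rewrite !inE eqxx ?orbT.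
have X4 : x4 \in leaves adj by apply: (allP Hall); rewrite !inE eqxx ?orbT.
have X5 : x5 \in leaves adj by apply: (allP Hall); rewrite !inE eqxx ?orbT.
have X6 : x6 \in leaves adj by apply: (allP Hall); rewrite !inE eqxx ?orbT.
have nx1a : x1 != a by rewrite eq_sym; exact: nl_neq Na X1.
have nx1b : x1 != b by rewrite eq_sym; exact: nl_neq Nb X1.
have nx1c : x1 != c by rewrite eq_sym; exact: nl_neq Nc X1.
have nx2a : x2 != a by rewrite eq_sym; exact: nl_neq Na X2.
have nx2b : x2 != b by rewrite eq_sym; exact: nl_neq Nb X2.
have nx2c : x2 != c by rewrite eq_sym; exact: nl_neq Nc X2.
have nx3a : x3 != a by rewrite eq_sym; exact: nl_neq Na X3.
have nx3b : x3 != b by rewrite eq_sym; exact: nl_neq Nb X3.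
have nx3c : x3 != c by rewrite eq_sym; exact: nl_neq Nc X3.
have nx4a : x4 != a by rewrite eq_sym; exact: nl_neq Na X4.
have nx4b : x4 != b by rewrite eq_sym; exact: nl_neq Nb X4.
have nx4c : x4 != c by rewrite eq_sym; exact: nl_neq Nc X4.
have nx5a : x5 != a by rewrite eq_sym; exact: nl_neq Na X5.
have nx5b : x5 != b by rewrite eq_sym; exact: nl_neq Nb X5.
have nx5c : x5 != c by rewrite eq_sym; exact: nl_neq Nc X5.
have nx6a : x6 != a by rewrite eq_sym; exact: nl_neq Na X6.
have nx6b : x6 != b by rewrite eq_sym; exact: nl_neq Nb X6.
have nx6c : x6 != c by rewrite eq_sym; exact: nl_neq Nc X6.

add_sym.
pose X := [:: x1; x2; x3; x4; x5; x6].
have M1 : x1 \in X by rewrite !inE eqxx ?orbT.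
have M2 : x2 \in X by rewrite !inE eqxx ?orbT.
have M3 : x3 \in X by rewrite !inE eqxx ?orbT.
have M4 : x4 \in X by rewrite !inE eqxx ?orbT.
have M5 : x5 \in X by rewrite !inE eqxx ?orbT.
have M6 : x6 \in X by rewrite !inE eqxx ?orbT.
pose pp v := if v == x1 then a else if v == x4 then a else if v == x2 then b
             else if v == x5 then b else c.
have P1 : pp x1 = a by rewrite /pp eqxx.
have P4 : pp x4 = a by rewrite /pp; kill_neq; rewrite eqxx.
have P2 : pp x2 = b by rewrite /pp; kill_neq; rewrite eqxx.
have P5 : pp x5 = b by rewrite /pp; kill_neq; rewrite eqxx.
have P3 : pp x3 = c by rewrite /pp; kill_neq.
have P6 : pp x6 = c by rewrite /pp; kill_neq.
have PP : forall i, i \in X -> [&& i \in leaves adj, adj i (pp i) & pp i \notin leaves adj].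
  move=> i; rewrite /X !in_cons in_nil orbF.
  by case/orP=> [/eqP->|/orP[/eqP->|/orP[/eqP->|/orP[/eqP->|/orP[/eqP->|/eqP->]]]]];
    rewrite ?P1 ?P2 ?P3 ?P4 ?P5 ?P6 ?X1 ?X2 ?X3 ?X4 ?X5 ?X6 ?A1 ?A2 ?A3 ?A4 ?A5 ?A6.
have LP : forall i j k, i \in X -> j \in X -> k \in X -> j != k ->
  @lambda _ adj R [set j; k] (fun e => (e == [set i; pp i])%:R) = ((i == j) || (i == k))%:R.
  move=> i j k /PP/and3P[Hi Hip Ni] /PP/and3P[Hj Hjp Nj] /PP/and3P[Hk Hkp Nk] jk.
  exact: (lambda_pend R HT Hi Hj Hk jk Hip Hjp Hkp Ni Nj Nk).
have CD : forall e i j, i \in X -> j \in X -> i != j ->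
  cord_path adj [set i; j] e = [|| e == [set i; pp i], e == [set j; pp j],
     on_path adj (pp i) (pp j) e | on_path adj (pp j) (pp i) e].
  move=> e i j /PP/and3P[Hi Hip Ni] /PP/and3P[Hj Hjp Nj] ij.
  exact: cord_dec.
have CI : forall i j, i \in X -> j \in X -> i != j -> [set i; j] \in cords adj.
  by move=> i j /PP/and3P[Hi _ _] /PP/and3P[Hj _ _] ij; apply: cord_in.
pose s1 := [:: [set x1; x2]; [set x2; x3]; [set x3; x4]; [set x4; x5]; [set x5; x6]; [set x6; x1]].
pose s2 := [:: [set x1; x3]; [set x3; x4]; [set x4; x6]; [set x6; x1]].
have HL1 : forall c0, (c0 \in L1) = (c0 \in s1) by move=> c0; rewrite !inE -!orbA ?orbF.
have HL2 : forall c0, (c0 \in L2) = (c0 \in s2) by move=> c0; rewrite !inE -!orbA ?orbF.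
have UL1 : uniq s1 by rewrite /= !inE !set2_eq; kill_neq; rewrite ?eqxx.
have UL2 : uniq s2 by rewrite /= !inE !set2_eq; kill_neq; rewrite ?eqxx.
have C1 : L1 \subset cords adj.
  by apply/subsetP => c0; rewrite HL1 /s1 !in_cons in_nil orbF; case6; apply: CI.
have C2 : L2 \subset cords adj.
  by apply/subsetP => c0; rewrite HL2 /s2 !in_cons in_nil orbF; case4; apply: CI.
have EI1 : forall e, (cord_path adj [set x1; x2] e + cord_path adj [set x3; x4] e +
    cord_path adj [set x5; x6] e = cord_path adj [set x2; x3] e +
    cord_path adj [set x4; x5] e + cord_path adj [set x6; x1] e)%N.
  move=> e; rewrite !CD // P1 P2 P3 P4 P5 P6.
  case: (eqVneq e [set x1; a]) => [->|?].
    by rewrite ?set2_eq !(off_path Hs) //; kill_neq; rewrite ?eqxx.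
  case: (eqVneq e [set x2; b]) => [->|?].
    by rewrite ?set2_eq !(off_path Hs) //; kill_neq; rewrite ?eqxx.
  case: (eqVneq e [set x3; c]) => [->|?].
    by rewrite ?set2_eq !(off_path Hs) //; kill_neq; rewrite ?eqxx.
  case: (eqVneq e [set x4; a]) => [->|?].
    by rewrite ?set2_eq !(off_path Hs) //; kill_neq; rewrite ?eqxx.
  case: (eqVneq e [set x5; b]) => [->|?].
    by rewrite ?set2_eq !(off_path Hs) //; kill_neq; rewrite ?eqxx.
  case: (eqVneq e [set x6; c]) => [->|?].
    by rewrite ?set2_eq !(off_path Hs) //; kill_neq; rewrite ?eqxx.
  kill_neq => /=.
  by case: (on_path adj a b e); case: (on_path adj b a e); case: (on_path adj b c e);
    case: (on_path adj c b e); case: (on_path adj c a e); case: (on_path adj a c e).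
have EI2 : forall e, (cord_path adj [set x1; x3] e + cord_path adj [set x4; x6] e =
    cord_path adj [set x3; x4] e + cord_path adj [set x6; x1] e)%N.
  move=> e; rewrite !CD // P1 P3 P4 P6.
  case: (eqVneq e [set x1; a]) => [->|?].
    by rewrite ?set2_eq !(off_path Hs) //; kill_neq; rewrite ?eqxx.
  case: (eqVneq e [set x3; c]) => [->|?].
    by rewrite ?set2_eq !(off_path Hs) //; kill_neq; rewrite ?eqxx.
  case: (eqVneq e [set x4; a]) => [->|?].
    by rewrite ?set2_eq !(off_path Hs) //; kill_neq; rewrite ?eqxx.
  case: (eqVneq e [set x6; c]) => [->|?].
    by rewrite ?set2_eq !(off_path Hs) //; kill_neq; rewrite ?eqxx.
  kill_neq => /=.
  by case: (on_path adj c a e); case: (on_path adj a c e).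
have ND1 : ~ indep adj R L1.
  case=> _ H.
  pose b1 c0 : R := if c0 \in [set [set x1; x2]; [set x3; x4]; [set x5; x6]] then 1 else -1.
  have Hw : forall w, \sum_(c0 in L1) b1 c0 * lambda adj c0 w = 0.
    move=> w; rewrite (sum_list _ HL1 UL1) !big_cons !big_nil /b1 !inE ?set2_eq; kill_neq.
    rewrite ?eqxx /=.
    have I := lambda_eq3 (R:=R) EI1 w.
    lra.
  have := H b1 Hw [set x1; x2]; rewrite HL1 !inE eqxx => /(_ isT).
  rewrite /b1 !inE eqxx /=; apply/eqP; exact: oner_neq0.
have ND2 : ~ indep adj R L2.
  case=> _ H.
  pose b1 c0 : R := if c0 \in [set [set x1; x3]; [set x4; x6]] then 1 else -1.
  have Hw : forall w, \sum_(c0 in L2) b1 c0 * lambda adj c0 w = 0.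
    move=> w; rewrite (sum_list _ HL2 UL2) !big_cons !big_nil /b1 !inE ?set2_eq; kill_neq.
    rewrite ?eqxx /=.
    have I := lambda_eq2 (R:=R) EI2 w.
    lra.
  have := H b1 Hw [set x1; x3]; rewrite HL2 !inE eqxx => /(_ isT).
  rewrite /b1 !inE eqxx /=; apply/eqP; exact: oner_neq0.
have PR1 : forall S : {set {set V}}, S \proper L1 -> indep adj R S.
  move=> S /properP[SL [c0 Hc0 Hc0S]].
  apply: (indep_of SL (subset_trans SL C1)) => b0 Hb Hz.
  have E1 := Hb (fun e => (e == [set x1; pp x1])%:R).
  have E2 := Hb (fun e => (e == [set x2; pp x2])%:R).
  have E3 := Hb (fun e => (e == [set x3; pp x3])%:R).
  have E4 := Hb (fun e => (e == [set x4; pp x4])%:R).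
  have E5 := Hb (fun e => (e == [set x5; pp x5])%:R).
  have E6 := Hb (fun e => (e == [set x6; pp x6])%:R).
  move: E1 E2 E3 E4 E5 E6; rewrite !(sum_list _ HL1 UL1) !big_cons !big_nil !LP //; kill_neq.
  rewrite ?eqxx /=; simp_num => E1 E2 E3 E4 E5 E6.
  have Z : b0 [set x1; x2] = 0 \/ b0 [set x2; x3] = 0 \/ b0 [set x3; x4] = 0 \/
           b0 [set x4; x5] = 0 \/ b0 [set x5; x6] = 0 \/ b0 [set x6; x1] = 0.
    by move: Hc0 (Hz c0 Hc0 Hc0S); rewrite HL1 /s1 !in_cons in_nil orbF; case6 => Z0; tauto.
  have [Z1 [Z2 [Z3 [Z4 [Z5 Z6]]]]] := cyc6 E1 E2 E3 E4 E5 E6 Z.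
  move=> c1; rewrite HL1 /s1 !in_cons in_nil orbF; case6; by [].
have PR2 : forall S : {set {set V}}, S \proper L2 -> indep adj R S.
  move=> S /properP[SL [c0 Hc0 Hc0S]].
  apply: (indep_of SL (subset_trans SL C2)) => b0 Hb Hz.
  have E1 := Hb (fun e => (e == [set x1; pp x1])%:R).
  have E2 := Hb (fun e => (e == [set x3; pp x3])%:R).
  have E3 := Hb (fun e => (e == [set x4; pp x4])%:R).
  have E4 := Hb (fun e => (e == [set x6; pp x6])%:R).
  move: E1 E2 E3 E4; rewrite !(sum_list _ HL2 UL2) !big_cons !big_nil !LP //; kill_neq.
  rewrite ?eqxx /=; simp_num => E1 E2 E3 E4.
  have Z : b0 [set x1; x3] = 0 \/ b0 [set x3; x4] = 0 \/ b0 [set x4; x6] = 0 \/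
           b0 [set x6; x1] = 0.
    by move: Hc0 (Hz c0 Hc0 Hc0S); rewrite HL2 /s2 !in_cons in_nil orbF; case4 => Z0; tauto.
  have [Z1 [Z2 [Z3 Z4]]] := cyc4 E1 E2 E3 E4 Z.
  move=> c1; rewrite HL2 /s2 !in_cons in_nil orbF; case4; by [].
have DE : (L1 :\: L2) :|: (L2 :\: L1) =
           [set [set x1; x2]; [set x2; x3]; [set x3; x1];
                [set x4; x5]; [set x5; x6]; [set x6; x4]].
  rewrite [[set x3; x1]]setUC [[set x6; x4]]setUC.
  apply/setP => c0; rewrite !inE.
  case: (c0 =P [set x1; x2]) => [->|/eqP ?]; first by rewrite ?set2_eq; kill_neq; rewrite ?eqxx.
  case: (c0 =P [set x2; x3]) => [->|/eqP ?]; first by rewrite ?set2_eq; kill_neq; rewrite ?eqxx.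
  case: (c0 =P [set x3; x4]) => [->|/eqP ?]; first by rewrite ?set2_eq; kill_neq; rewrite ?eqxx.
  case: (c0 =P [set x4; x5]) => [->|/eqP ?]; first by rewrite ?set2_eq; kill_neq; rewrite ?eqxx.
  case: (c0 =P [set x5; x6]) => [->|/eqP ?]; first by rewrite ?set2_eq; kill_neq; rewrite ?eqxx.
  case: (c0 =P [set x6; x1]) => [->|/eqP ?]; first by rewrite ?set2_eq; kill_neq; rewrite ?eqxx.
  case: (c0 =P [set x1; x3]) => [->|/eqP ?]; first by rewrite ?set2_eq; kill_neq; rewrite ?eqxx.
  by case: (c0 == [set x4; x6]).
pose sD := [:: [set x1; x2]; [set x2; x3]; [set x3; x1]; [set x4; x5]; [set x5; x6]; [set x6; x4]].
have HD : forall c0, (c0 \in (L1 :\: L2) :|: (L2 :\: L1)) = (c0 \in sD).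
  by move=> c0; rewrite DE !inE -!orbA ?orbF.
have UD : uniq sD by rewrite /= !inE !set2_eq; kill_neq; rewrite ?eqxx.
have ID : indep adj R ((L1 :\: L2) :|: (L2 :\: L1)).
  apply: (indep_of (subxx _)) => [|b0 Hb _].
    by apply/subsetP => c0; rewrite HD /sD !in_cons in_nil orbF; case6; apply: CI.
  have E1 := Hb (fun e => (e == [set x1; pp x1])%:R).
  have E2 := Hb (fun e => (e == [set x2; pp x2])%:R).
  have E3 := Hb (fun e => (e == [set x3; pp x3])%:R).
  have E4 := Hb (fun e => (e == [set x4; pp x4])%:R).
  have E5 := Hb (fun e => (e == [set x5; pp x5])%:R).
  have E6 := Hb (fun e => (e == [set x6; pp x6])%:R).
  move: E1 E2 E3 E4 E5 E6; rewrite !(sum_list _ HD UD) !big_cons !big_nil !LP //; kill_neq.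
  rewrite ?eqxx /=; simp_num => E1 E2 E3 E4 E5 E6.
  have [Z1 [Z2 [Z3 [Z4 [Z5 Z6]]]]] := tri2 E1 E2 E3 E4 E5 E6.
  move=> c1; rewrite HD /sD !in_cons in_nil orbF; case6; by [].
have CC1 : circuit adj R L1 by split => //; split.
have CC2 : circuit adj R L2 by split => //; split.
split => //.
apply: (not_binary (c0 := [set x1; x2])) CC1 CC2 ID _.
by rewrite HD !inE eqxx.
Qed.

Local Close Scope ring_scope.
From mathcomp Require Import zify.

Definition adjI (V : finType) (adj : rel V) : rel V :=
  [rel u v | adj u v && (u \notin leaves adj) && (v \notin leaves adj)].
Definition avoid (V : finType) (adj : rel V) (z : V) : rel V :=
  [rel u v | adj u v && (u != z) && (v != z)].

Lemma path_restrict (T : eqType) (e : rel T) (P : pred T) x p :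
  path e x p -> all P (x :: p) -> path [rel u v | e u v && P u && P v] x p.
Proof.
elim: p x => [|y p IH] x //= /andP[Hxy Hp] /and3P[Px Py Ha].
by rewrite Hxy Px Py /= IH //= Py.
Qed.

Lemma path_targets (T : eqType) (e : rel T) (Q : pred T) x p :
  (forall u v, e u v -> Q v) -> path e x p -> all Q p.
Proof.
move=> H; elim: p x => [|y p IH] x //= /andP[Hxy Hp].
by rewrite (H _ _ Hxy) (IH y Hp).
Qed.

Lemma last_eq_nil (T : eqType) (u : T) q : uniq (u :: q) -> last u q = u -> q = [::].
Proof.
case/lastP: q => [//|q y]; rewrite last_rcons => Hu Ey; subst y.
by move: Hu; rewrite /= mem_rcons in_cons eqxx.
Qed.

Lemma NC (V : finType) (adj : rel V) (HT : is_tree adj) (e : rel V) z a b :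
  (forall u v, e u v -> adj u v && (u != z) && (v != z)) ->
  adj z a -> adj z b -> a != b -> connect e a b -> False.
Proof.
case: HT => Hs [_ [_ Hac]] He Hza Hzb ab /connectP [p Hp Hb].
move: Hb; case: (shortenP Hp) => p' Hp' Hu _ Hl {Hp}.
case: p' Hp' Hu Hl => [|h p'] Hp' Hu Hl; first by rewrite /= in Hl; rewrite Hl eqxx in ab.
have Hall : all (fun v => v != z) (h :: p').
  by apply: (path_targets (e := e)) Hp' => u v /He /andP[].
have az : a != z by move: Hp' => /= /andP[/He /andP[/andP[_ ->]]].
have Hc := Hac [:: z, a, h & p'].
have Hsz : 3 <= size [:: z, a, h & p'] by [].
have Huc : uniq [:: z, a, h & p'].
  rewrite cons_uniq Hu andbT in_cons negb_or eq_sym az /=.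
  by apply/negP => Hz; move/allP: Hall => /(_ z Hz); rewrite eqxx.
move: (Hc Huc Hsz); rewrite /cycle rcons_cons /= Hza rcons_path.
have -> : path adj h p'.
  by move: (Hp') => /= /andP[_ Hp2]; apply: sub_path Hp2 => u v /He /andP[/andP[-> _] _].
rewrite /= in Hl; rewrite -Hl.
move=> /negP; apply; apply/and4P; split => //; last by rewrite Hs.
by move: (Hp') => /= /andP[/He /andP[/andP[-> _] _]].
Qed.

Lemma ext_path (V : finType) (e : rel V) (F : pred V) y0 : ~~ F y0 ->
  exists q, [/\ path e y0 q, uniq (y0 :: q), all (predC F) (y0 :: q) &
    forall x, e (last y0 q) x -> F x || (x \in y0 :: q)].
Proof.
move=> Fy0.
suff H : forall n q, #|V| - size q <= n -> path e y0 q -> uniq (y0 :: q) ->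
    all (predC F) (y0 :: q) ->
    exists q', [/\ path e y0 q', uniq (y0 :: q'), all (predC F) (y0 :: q') &
    forall x, e (last y0 q') x -> F x || (x \in y0 :: q')].
  by apply: (H #|V| [::]) => //=; rewrite ?subn0 // Fy0.
elim=> [|n IH] q Hn Hp Hu Ha.
  have := max_card (mem (y0 :: q)); move/card_uniqP: Hu => ->; rewrite /= => H; exfalso.
  by move: Hn; rewrite leqn0 subn_eq0 leqNgt H.
case: (pickP (fun x => e (last y0 q) x && ~~ F x && (x \notin y0 :: q))) =>
    [x /andP[/andP[Hx Fx] Nx]|Hnone].
  apply: (IH (rcons q x)).
  - rewrite size_rcons; lia.
  - by rewrite rcons_path Hp Hx.
  - by rewrite -rcons_cons rcons_uniq Nx Hu.
  - by rewrite -rcons_cons all_rcons Ha andbT.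
exists q; split => // x Hx; move: (Hnone x); rewrite Hx /=.
by case: (F x); case: (x \in y0 :: q).
Qed.

Lemma int_connect (V : finType) (adj : rel V) (HT : is_tree adj) a b :
  a \notin leaves adj -> b \notin leaves adj -> connect (adjI adj) a b.
Proof.
have Hs : symmetric adj by case: HT.
move=> Na Nb; have [t Hw] := ex_walk HT a b.
have Hw' := Hw; case/and3P: Hw' => Hp /eqP Hl _.
have Hall : all (fun v => v \notin leaves adj) (a :: t).
  apply/allP => v; rewrite in_cons => /orP[/eqP->//|Hv].
  case: (eqVneq v b) => [->//|vb]; exact: (walk_int Hs Hw Hv vb).
apply/(@connectP V); exists t => //.
exact: (path_restrict (P := fun v => v \notin leaves adj)).
Qed.

Lemma conn2 (V : finType) (adj : rel V) x0 q z :
  path (adjI adj) x0 q -> z \notin x0 :: q -> {subset x0 :: q <= connect (avoid adj z) x0}.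
Proof.
move=> Hp Hz.
have Hall : all (fun v => v != z) (x0 :: q).
  by apply/allP => v Hv; apply: (contraNneq _ Hz) => E; rewrite -E.
have Hp2 := path_restrict Hp Hall.
apply: path_connect; apply: sub_path Hp2 => u v /=.
by rewrite /adjI /avoid /= => /andP[/andP[/andP[/andP[-> _] _] ->] ->].
Qed.

Lemma conn1 (V : finType) (adj : rel V) x0 q :
  path (adjI adj) x0 q -> uniq (x0 :: q) -> forall x, x \in x0 :: q -> x != last x0 q ->
  connect (avoid adj (last x0 q)) x0 x.
Proof.
case/lastP: q => [|q y].
  by move=> _ _ x; rewrite inE => /eqP-> /=; rewrite eqxx.
rewrite rcons_path last_rcons -rcons_cons rcons_uniq => /andP[Hp _] /andP[Ny _] x.
rewrite mem_rcons in_cons => /orP[/eqP->|Hx]; first by rewrite eqxx.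
by move=> _; exact: (conn2 Hp Ny Hx).
Qed.

Lemma avoid_sym (V : finType) (adj : rel V) z : symmetric adj -> symmetric (avoid adj z).
Proof. by move=> Hs u v; rewrite /avoid /= Hs andbAC. Qed.

Lemma one_nb (V : finType) (adj : rel V) (HT : is_tree adj) z r (S : pred V) :
  (forall x, adjI adj z x -> S x) -> (forall x, S x -> connect (avoid adj z) r x) ->
  forall a b, adjI adj z a -> adjI adj z b -> a = b.
Proof.
have Hs : symmetric adj by case: HT.
move=> H1 H2 a b Ha Hb; case: (eqVneq a b) => // ab; exfalso.
have Har := H2 a (H1 a Ha); rewrite (sym_connect_sym (avoid_sym z Hs)) in Har.
have Hab := connect_trans Har (H2 b (H1 b Hb)).
apply: (NC HT (e := avoid adj z) (z := z)) Hab => //.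
all: first [by move=> u v H | by move: Ha => /andP[/andP[-> _] _] |
            by move: Hb => /andP[/andP[-> _] _]].
Qed.

Lemma cherry_at (V : finType) (adj : rel V) z :
  z \notin leaves adj -> deg adj z = 3 ->
  (forall a b, adjI adj z a -> adjI adj z b -> a = b) ->
  exists l1 l2, [/\ l1 \in leaves adj, l2 \in leaves adj, l1 != l2, adj z l1 & adj z l2].
Proof.
move=> Nz Dz Hu.
have H := cardsID [set u | u \in leaves adj] [set u | adj z u].
have H2 : #|[set u | adj z u] :\: [set u | u \in leaves adj]| <= 1.
  rewrite leqNgt; apply/negP => /card_gt1P [u [v [Hu' Hv' uv]]].
  move: Hu' Hv'; rewrite !inE => /andP[Lu Au] /andP[Lv Av].
  have := Hu u v; rewrite /adjI /= Au Av Nz /= !inE Lu Lv => /(_ isT isT) E.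
  by rewrite E eqxx in uv.
have H3 : 1 < #|[set u | adj z u] :&: [set u | u \in leaves adj]|.
  move: H; rewrite -/(deg adj z) Dz; lia.
case/card_gt1P: H3 => l1 [l2 [H1' H2' l12]].
move: H1' H2'; rewrite !inE => /andP[A1 L1] /andP[A2 L2].
by exists l1, l2; split => //; rewrite inE.
Qed.

Lemma last_int (V : finType) (adj : rel V) x0 q :
  path (adjI adj) x0 q -> x0 \notin leaves adj -> last x0 q \notin leaves adj.
Proof.
elim: q x0 => [|y q IH] x0 //= /andP[/andP[/andP[_ _] Ny] Hp] _.
exact: IH.
Qed.

Lemma end_nb (V : finType) (adj : rel V) (HT : is_tree adj) x0 q :
  path (adjI adj) x0 q -> uniq (x0 :: q) ->
  (forall x, adjI adj (last x0 q) x -> x \in x0 :: q) ->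
  forall a b, adjI adj (last x0 q) a -> adjI adj (last x0 q) b -> a = b.
Proof.
have Hi : irreflexive adj by case: HT => _ [].
move=> Hp Hu Hm.
apply: (one_nb HT (r := x0) (S := fun x => (x \in x0 :: q) && (x != last x0 q))) => x.
  move=> H; rewrite (Hm x H) /=.
  apply/eqP => E; move: H; rewrite E /adjI /= Hi.
  by [].
by case/andP=> Hx xz; exact: conn1.
Qed.

Lemma cross (T : finType) (e : rel T) (A : pred T) x y :
  connect e x y -> ~~ A x -> A y -> exists u w, [/\ ~~ A u, A w & e u w].
Proof.
case/connectP => p Hp ->; elim: p x Hp => [|z p IH] x /=.
  by move=> _ Nx Ax; rewrite Ax in Nx.
move=> /andP[Hxz Hp] Nx Al; case: (boolP (A z)) => Az.
  by exists x, z.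
exact: IH Hp Az Al.
Qed.

Lemma leaf_diff (V : finType) (adj : rel V) (Hs : symmetric adj) l l' zi zj :
  l \in leaves adj -> adj zi l -> adj zj l' -> zi != zj -> l != l'.
Proof.
move=> Hl Hi Hj ij; apply/eqP => E; subst l'.
have H1 : adj l zi by rewrite Hs.
have H2 : adj l zj by rewrite Hs.
by rewrite (leaf_nb Hl H1 H2) eqxx in ij.
Qed.

Lemma mk_cherry (V : finType) (adj : rel V) (Hs : symmetric adj) z l1 l2 :
  l1 \in leaves adj -> l2 \in leaves adj -> l1 != l2 -> adj z l1 -> adj z l2 ->
  cherry adj l1 l2.
Proof.
move=> L1 L2 l12 A1 A2; apply/and4P; split => //.
apply/existsP; exists z; apply/existsP; exists z.
rewrite Hs A1 Hs A2 /=; apply/set0Pn; exists z; by rewrite !inE eqxx !orbT.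
Qed.

Lemma first_part (R : realFieldType) (V : finType) (adj : rel V) :
  is_Xtree adj ->
  (forall x1 x2 x3 x4 x5 x6 : V,
     uniq [:: x1; x2; x3; x4; x5; x6] ->
     all (fun x => x \in leaves adj) [:: x1; x2; x3; x4; x5; x6] ->
     cherry adj x1 x4 -> cherry adj x2 x5 -> cherry adj x3 x6 ->
     let L1 := [set [set x1; x2]; [set x2; x3]; [set x3; x4];
                    [set x4; x5]; [set x5; x6]; [set x6; x1]] in
     let L2 := [set [set x1; x3]; [set x3; x4]; [set x4; x6]; [set x6; x1]] in
     [/\ circuit adj R L1, circuit adj R L2,
         (L1 :\: L2) :|: (L2 :\: L1) =
           [set [set x1; x2]; [set x2; x3]; [set x3; x1];
                [set x4; x5]; [set x5; x6]; [set x6; x4]],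
         indep adj R ((L1 :\: L2) :|: (L2 :\: L1)) &
         ~ binary_matroid adj R]).
Proof.
move=> [HT _] x1 x2 x3 x4 x5 x6 Hu Hall C14 C25 C36.
have Hu' := Hu; move: Hu'; rewrite /= !inE !negb_or => Hu'; split_ands.
add_sym.
have X1 : x1 \in leaves adj by apply: (allP Hall); rewrite !inE eqxx ?orbT.
have X2 : x2 \in leaves adj by apply: (allP Hall); rewrite !inE eqxx ?orbT.
have X3 : x3 \in leaves adj by apply: (allP Hall); rewrite !inE eqxx ?orbT.
have [pa /andP[A1 A4] Na] : exists2 p, adj x1 p && adj x4 p & p \notin leaves adj.
  by apply: (cherry_par HT C14 X2).
have [pb /andP[A2 A5] Nb] : exists2 p, adj x2 p && adj x5 p & p \notin leaves adj.
  by apply: (cherry_par HT C25 X3).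
have [pc /andP[A3 A6] Nc] : exists2 p, adj x3 p && adj x6 p & p \notin leaves adj.
  by apply: (cherry_par HT C36 X1).
exact: (part1 R HT Hu Hall A1 A4 A2 A5 A3 A6 Na Nb Nc).
Qed.

Lemma adjI_sym (V : finType) (adj : rel V) : symmetric adj -> symmetric (adjI adj).
Proof. by move=> Hs u v; rewrite /adjI /= Hs andbAC. Qed.

Lemma second_part (R : realFieldType) (V : finType) (adj : rel V) :
  is_Xtree adj -> is_binary_Xtree adj -> binary_matroid adj R -> is_caterpillar adj.
Proof.
move=> HX HB Hbin; split => //.
have HT : is_tree adj by case: HX.
have Hs : symmetric adj by case: HT.
have Hi : irreflexive adj by case: HT => _ [].
have D3 : forall v, v \notin leaves adj -> deg adj v = 3 by case: HB.
case: (pickP (fun v => v \notin leaves adj)) => [y0 Ny0|Hnone]; last first.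
  have : 0 < #|leaves adj| by case: HX => _ [_ H]; apply: leq_trans H.
  case/card_gt0P => x _; exists x, [::]; split => //; split => // v Hv.
  by move: (Hnone v); rewrite /= Hv.
have [q1 [P1 U1 _ M1]] := @ext_path V (adjI adj) pred0 y0 isT.
set z1 := last y0 q1 in M1.
have [q2 [P2 U2 _ M2]] := @ext_path V (adjI adj) pred0 z1 isT.
set z2 := last z1 q2 in M2.
have Nz1 : z1 \notin leaves adj by apply: last_int.
have Nz2 : z2 \notin leaves adj by apply: last_int.
have E1 := end_nb HT P1 U1 (fun x H => M1 x H).
have E2 := end_nb HT P2 U2 (fun x H => M2 x H).
case: (boolP [forall v, (v \notin leaves adj) ==> (v \in z1 :: q2)]) => [/forallP Hall|].
  exists z1, q2; split; last split => //.
    by apply: sub_path P2 => u v /andP[/andP[]].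
  by move=> v Hv; move: (Hall v); rewrite Hv.
case/forallPn => v; rewrite negb_imply => /andP[Nv Hv].
have [u [w [Nu Hw Huw]]] := cross (int_connect HT Nv Nz1) Hv (mem_head z1 q2).
have Nu' : u \notin leaves adj by move: Huw => /andP[/andP[_ ->]].
have [q3 [P3 U3 A3 M3]] := @ext_path V (adjI adj) (mem (z1 :: q2)) u Nu.
set z3 := last u q3 in M3.
have Nz3 : z3 \notin leaves adj by apply: last_int.
have z3s : z3 \notin z1 :: q2.
  by move/allP: A3 => /(_ z3 (mem_last u q3)).
have E3 : forall a b, adjI adj z3 a -> adjI adj z3 b -> a = b.
  apply: (one_nb HT (r := z1)
     (S := fun x => (x \in z1 :: q2) || ((x \in u :: q3) && (x != z3)))) => x.
    move=> H; have xz : x != z3 by apply/eqP => E; move: H; rewrite E /adjI /= Hi.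
    case/orP: (M3 x H) => Hx; first by apply/orP; left.
    by rewrite Hx xz orbT.
  case/orP => [Hx|/andP[Hx xz]]; first exact: (conn2 P2 z3s Hx).
  have uz : u != z3.
    apply/eqP => E; have Eq : q3 = [::] by apply: (last_eq_nil U3); rewrite -/z3 -E.
    by move: (Hx) (xz); rewrite Eq mem_seq1 => /eqP->; rewrite -E eqxx.
  have Cw : connect (avoid adj z3) z1 w := conn2 P2 z3s Hw.
  have Cx : connect (avoid adj z3) u x := conn1 P3 U3 Hx xz.
  have Hwu : avoid adj z3 w u.
    rewrite /avoid /= uz andbT.
    have -> : w != z3 by apply: contraNneq z3s => <-.
    by move: Huw => /andP[/andP[H _] _]; rewrite Hs H.
  exact: (connect_trans Cw (connect_trans (connect1 Hwu) Cx)).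
have z12 : z1 != z2.
  apply/eqP => E; have Eq : q2 = [::] by apply: (last_eq_nil U2); rewrite -/z2 -E.
  move: Hw; rewrite Eq => Hw'.
  have Ew : w = z1 by apply/eqP; rewrite -mem_seq1; exact: Hw'.
  subst w.
  have := M2 u; rewrite -/z2 -E (adjI_sym Hs) Huw /= Eq.
  by move/(_ isT) => H; move: Nu; rewrite Eq => /negP; apply.
have z13 : z1 != z3 by apply: contraNneq z3s => <-; exact: mem_head.
have z23 : z2 != z3 by apply: contraNneq z3s => <-; exact: mem_last.
have [l1 [k1 [L1 K1 lk1 B1 C1]]] := cherry_at Nz1 (D3 _ Nz1) E1.
have [l2 [k2 [L2 K2 lk2 B2 C2]]] := cherry_at Nz2 (D3 _ Nz2) E2.
have [l3 [k3 [L3 K3 lk3 B3 C3]]] := cherry_at Nz3 (D3 _ Nz3) E3.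
have := first_part R HX (x1 := l1) (x2 := l2) (x3 := l3) (x4 := k1) (x5 := k2) (x6 := k3).
move=> H.
have d1 := leaf_diff Hs L1 B1 B2 z12. have d2 := leaf_diff Hs L1 B1 C2 z12.
have d3 := leaf_diff Hs L1 B1 B3 z13. have d4 := leaf_diff Hs L1 B1 C3 z13.
have d5 := leaf_diff Hs K1 C1 B2 z12. have d6 := leaf_diff Hs K1 C1 C2 z12.
have d7 := leaf_diff Hs K1 C1 B3 z13. have d8 := leaf_diff Hs K1 C1 C3 z13.
have d9 := leaf_diff Hs L2 B2 B3 z23. have d10 := leaf_diff Hs L2 B2 C3 z23.
have d11 := leaf_diff Hs K2 C2 B3 z23. have d12 := leaf_diff Hs K2 C2 C3 z23.
have U : uniq [:: l1; l2; l3; k1; k2; k3] by rewrite /= !inE; kill_neq.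
have Al : all (fun x => x \in leaves adj) [:: l1; l2; l3; k1; k2; k3].
  by rewrite /= L1 L2 L3 K1 K2 K3.
have [_ _ _ _] := H U Al (mk_cherry Hs L1 K1 lk1 B1 C1) (mk_cherry Hs L2 K2 lk2 B2 C2)
  (mk_cherry Hs L3 K3 lk3 B3 C3).
by [].
Qed.

Local Close Scope ring_scope.
Unset Implicit Arguments.

Theorem mainTheorem12 (R : realFieldType) (V : finType) (adj : rel V) :
  is_Xtree adj ->
  (forall x1 x2 x3 x4 x5 x6 : V,
     uniq [:: x1; x2; x3; x4; x5; x6] ->
     all (fun x => x \in leaves adj) [:: x1; x2; x3; x4; x5; x6] ->
     cherry adj x1 x4 -> cherry adj x2 x5 -> cherry adj x3 x6 ->
     let L1 := [set [set x1; x2]; [set x2; x3]; [set x3; x4];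
                    [set x4; x5]; [set x5; x6]; [set x6; x1]] in
     let L2 := [set [set x1; x3]; [set x3; x4]; [set x4; x6]; [set x6; x1]] in
     [/\ circuit adj R L1, circuit adj R L2,
         (L1 :\: L2) :|: (L2 :\: L1) =
           [set [set x1; x2]; [set x2; x3]; [set x3; x1];
                [set x4; x5]; [set x5; x6]; [set x6; x4]],
         indep adj R ((L1 :\: L2) :|: (L2 :\: L1)) &
         ~ binary_matroid adj R]) /\
  (is_binary_Xtree adj -> binary_matroid adj R -> is_caterpillar adj).
Proof.
move=> HX; split; first exact: first_part.
exact: second_part.
Qed.
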